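(* Let $(A,B)$ be a Katsura pair. Then the KEP-action $(G_B,E_A)$ is contracting if and only if $\limsup_{n\to\infty}\left(\max_{\mu\in E^n_{A,\infty}}\frac{|B_\mu|}{A_\mu}\right)^{1/n}<1$.
   Context: Katsura pair: $N\in\mathbb{N}$, $A\in M_N(\mathbb{N})$ (nonnegative integers), $B\in M_N(\mathbb{Z})$ with $A_{ij}=0\Rightarrow B_{ij}=0$. Graph $E_A$: vertices $\{1,\dots,N\}$, edges $e_{i,j,m}$ ($0\le m<A_{ij}$), $r=i$, $s=j$; $B_e=B_{r(e)s(e)}$. For a path $\mu=e_{i_0,i_1,r_1}\cdots e_{i_{n-1},i_n,r_n}$, $A_\mu=\prod_tA_{i_ti_{t+1}}$, $B_\mu=\prod_tB_{i_ti_{t+1}}$. The group bundle $\mathbb{Z}\times E_A^0$ (elements $a_i^k$) acts by $a_i^k\cdot e_{i,j,m}=e_{i,j,\hat m}$, $a_i^k|_{e_{i,j,m}}=a_j^{\hat k}$ with $kB_{ij}+m=\hat kA_{ij}+\hat m$, $0\le\hat m<A_{ij}$, extended recursively to paths; $G_B$ is the faithful quotient and $(G_B,E_A)$ the KEP-action; $(G_B)_i$ its isotropy group at $i$. $E^0_{A,\infty}=\{i:(G_B)_i\text{ infinite}\}$, and $E_{A,\infty}$ is the subgraph with vertices $E^0_{A,\infty}$ and edges $\{e:s(e)\in E^0_{A,\infty},B_e\ne0\}$; $E^n_{A,\infty}$ its paths of length $n$. Contracting: there is a finite $F\subseteq G_B$ such that for every $g$ there is $n$ with $g|_\mu\in F$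 for all paths $\mu\in d(g)E_A^k$, $k\ge n$. *)

(* Defs.v *)
From mathcomp Require Import all_boot all_order all_algebra.
From mathcomp Require Import all_classical all_reals all_analysis.
Set Implicit Arguments. Unset Strict Implicit. Unset Printing Implicit Defensive.
Import Order.TTheory GRing.Theory Num.Theory.
Local Open Scope ring_scope.

(* Vertices of E_A are 'I_N.  A finite path
     mu = e_{i0,i1,r1} e_{i1,i2,r2} ... e_{i(n-1),in,rn}
   is represented by its range vertex i0 together with the sequence
   [:: (i1,r1); ...; (in,rn)]. *)

Section Katsura.
Variables (N : nat) (A : 'M[nat]_N) (B : 'M[int]_N).

Definition Katsura_pair : Prop :=
  forall i j : 'I_N, A i j = 0%N -> B i j = 0.

Fixpoint is_path (i : 'I_N) (p : seq ('I_N * nat)) : bool :=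
  match p with
  | [::] => true
  | (j, m) :: p' => (m < A i j)%N && is_path j p'
  end.

Definition path_src (i : 'I_N) (p : seq ('I_N * nat)) : 'I_N :=
  last i (map fst p).

(* a_i^k . mu  (kB_ij + m = khat A_ij + mhat, 0 <= mhat < A_ij) *)
Fixpoint act (k : int) (i : 'I_N) (p : seq ('I_N * nat)) : seq ('I_N * nat) :=
  match p with
  | [::] => [::]
  | (j, m) :: p' =>
      let x := k * B i j + m%:Z in
      (j, absz (x %% (A i j)%:Z)%Z) :: act (x %/ (A i j)%:Z)%Z j p'
  end.

(* a_i^k |_mu = a_{s(mu)}^{res k i mu} *)
Fixpoint res (k : int) (i : 'I_N) (p : seq ('I_N * nat)) : int :=
  match p with
  | [::] => k
  | (j, m) :: p' =>
      let x := k * B i j + m%:Z in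
      res (x %/ (A i j)%:Z)%Z j p'
  end.

(* a_i^k and a_i^k' are identified in the faithful quotient G_B *)
Definition Gequiv (i : 'I_N) (k k' : int) : Prop :=
  forall p, is_path i p -> act k i p = act k' i p.

(* (G_B)_i is infinite: infinitely many classes of a_i^k *)
Definition isotropy_infinite (i : 'I_N) : Prop :=
  forall L : seq int, exists k, forall l, l \in L -> ~ Gequiv i k l.

(* Contracting: a finite F of elements of G_B, given by representatives
   (vertex, k) standing for the class of a_vertex^k. *)
Definition contracting : Prop :=
  exists F : seq ('I_N * int),
    forall (i : 'I_N) (k : int), exists n : nat,
      forall p, is_path i p -> (n <= size p)%N ->
        exists2 f, f \in F &
          f.1 = path_src i p /\ Gequiv f.1 (res k i p) f.2.

(* mu is a path in E_{A,infty}: every edge e satisfies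
   s(e) in E^0_{A,infty} and B_e <> 0 *)
Fixpoint is_inf_path (i : 'I_N) (p : seq ('I_N * nat)) : Prop :=
  match p with
  | [::] => True
  | (j, m) :: p' =>
      [/\ (m < A i j)%N, isotropy_infinite j, B i j != 0 & is_inf_path j p']
  end.

Fixpoint A_path (i : 'I_N) (p : seq ('I_N * nat)) : nat :=
  match p with
  | [::] => 1%N
  | (j, _) :: p' => (A i j * A_path j p')%N
  end.

Fixpoint B_path (i : 'I_N) (p : seq ('I_N * nat)) : int :=
  match p with
  | [::] => 1
  | (j, _) :: p' => B i j * B_path j p'
  end.

(* max_{mu in E^n_{A,infty}} |B_mu| / A_mu  (the maximum of a finite set,
   written as its supremum; it is 0 if E^n_{A,infty} is empty) *)
Definition max_ratio (R : realType) (n : nat) : R :=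
  sup [set r : R | exists (i : 'I_N) (p : seq ('I_N * nat)),
        [/\ size p = n, is_inf_path i p &
            r = (`|B_path i p|%:~R) / (A_path i p)%:R]].

End Katsura.

(* Main.v *)
Require Import Defs.
From mathcomp Require Import all_boot all_order all_algebra.
From mathcomp Require Import all_classical all_reals all_analysis.
From mathcomp Require Import zify ring lra.
Import Order.TTheory GRing.Theory Num.Theory.
Local Open Scope ring_scope.
Set Implicit Arguments. Unset Strict Implicit.

Lemma step_bound (P : int) (m a : nat) : (m < a)%N ->
  (`|((P + m%:Z) %/ a%:Z)%Z| * a <= `|P| + a)%N.
Proof.
move=> ma.
have a0' : a%:Z != 0 by rewrite eqz_nat; lia.
have h1 := divz_eq (P + m%:Z) a%:Z.
have h2 := modz_ge0 (P + m%:Z) a0'.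
have h3 := ltz_mod (P + m%:Z) a0'.
move: h1 h2 h3.
set q := ((P + m%:Z) %/ a%:Z)%Z; set r := ((P + m%:Z) %% a%:Z)%Z.
nia.
Qed.
Lemma step_big (x : int) (a : nat) : (0 < a)%N ->
  exists2 m, (m < a)%N & (`|x| <= `|((x + m%:Z) %/ a%:Z)%Z| * a)%N.
Proof.
move=> a0.
have a0' : a%:Z != 0 by rewrite eqz_nat; lia.
have [x0|x0] := lerP 0 x.
  exists a.-1; first lia.
  have h1 := divz_eq (x + a.-1%:Z) a%:Z.
  have h2 := modz_ge0 (x + a.-1%:Z) a0'.
  have h3 := ltz_mod (x + a.-1%:Z) a0'.
  move: h1 h2 h3.
  set q := ((x + a.-1%:Z) %/ a%:Z)%Z; set r := ((x + a.-1%:Z) %% a%:Z)%Z.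
  nia.
exists 0%N => //.
have h1 := divz_eq (x + 0%N%:Z) a%:Z.
have h2 := modz_ge0 (x + 0%N%:Z) a0'.
have h3 := ltz_mod (x + 0%N%:Z) a0'.
move: h1 h2 h3.
set q := ((x + 0%N%:Z) %/ a%:Z)%Z; set r := ((x + 0%N%:Z) %% a%:Z)%Z.
nia.
Qed.

Section K.
Variables (N : nat) (A : 'M[nat]_N) (B : 'M[int]_N).

Lemma step_eq (x t : int) (m a : nat) (b : int) : (0 < a)%N ->
  let y' := t * b + m%:Z in
  let m1 := absz (y' %% a%:Z)%Z in
  let t1 := (y' %/ a%:Z)%Z in
  ((x + t) * b + m%:Z) = (x * b + m1%:Z) + t1 * a%:Z /\ (m1 < a)%N
  /\ m1%:Z = (y' %% a%:Z)%Z.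
Proof.
move=> a0 y' m1 t1.
have a0' : a%:Z != 0 by rewrite eqz_nat -lt0n.
have hm : m1%:Z = (y' %% a%:Z)%Z by rewrite /m1 gez0_abs // modz_ge0.
split; last split => //.
  have hd := divz_eq y' a%:Z.
  rewrite hm /t1 mulrDl; move: hd; rewrite /y'; lia.
have := ltz_mod y' a0'; rewrite -hm /=; lia.
Qed.

Lemma act_res_add p : forall i x t, is_path A i p ->
  act A B (x + t) i p = act A B x i (act A B t i p) /\
  res A B (x + t) i p = res A B x i (act A B t i p) + res A B t i p.
Proof.
elim: p => [|[j m] p IH] i x t /=; first by [].
move=> /andP[mA Hp].
have a0 : (0 < A i j)%N by apply: leq_ltn_trans mA.
have a0' : (A i j)%:Z != 0 by rewrite eqz_nat -lt0n.
have [E [m1A m1E]] := step_eq x t m (B i j) a0.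
set y' := t * B i j + m%:Z in E m1A m1E *.
set t1 := (y' %/ (A i j)%:Z)%Z in E *.
set m1 := absz _ in E m1A m1E *.
rewrite E /=.
have -> : ((x * B i j + m1%:Z + t1 * (A i j)%:Z) %% (A i j)%:Z)%Z
   = ((x * B i j + m1%:Z) %% (A i j)%:Z)%Z.
  by rewrite addrC modzMDl.
have -> : ((x * B i j + m1%:Z + t1 * (A i j)%:Z) %/ (A i j)%:Z)%Z
   = t1 + ((x * B i j + m1%:Z) %/ (A i j)%:Z)%Z.
  by rewrite addrC divzMDl.
have [IH1 IH2] := IH j (((x * B i j + m1%:Z) %/ (A i j)%:Z)%Z) t1 Hp.
by rewrite [t1 + _]addrC IH1 IH2.
Qed.


Lemma act_path p : forall i k, is_path A i p ->
  [/\ is_path A i (act A B k i p), path_src i (act A B k i p) = path_src i p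
   & size (act A B k i p) = size p].
Proof.
elim: p => [|[j m] p IH] i k //= /andP[mA Hp].
have a0 : (0 < A i j)%N by apply: leq_ltn_trans mA.
have a0' : (A i j)%:Z != 0 by rewrite eqz_nat -lt0n.
have [H1 H2 H3] := IH j ((k * B i j + m%:Z) %/ (A i j)%:Z)%Z Hp.
split.
- rewrite H1 andbT.
  have := ltz_mod (k * B i j + m%:Z) a0'.
  have := modz_ge0 (k * B i j + m%:Z) a0'. lia.
- by move: H2; rewrite /path_src /=.
- by rewrite H3.
Qed.

Lemma path_src_cat (i : 'I_N) (p q : seq ('I_N * nat)) : path_src i (p ++ q) = path_src (path_src i p) q.
Proof. by rewrite /path_src map_cat last_cat. Qed.

Lemma is_path_cat p : forall i q,
  is_path A i (p ++ q) = is_path A i p && is_path A (path_src i p) q.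
Proof.
elim: p => [|[j m] p IH] i q //=.
by rewrite IH andbA.
Qed.

Lemma act_cat p : forall i k q,
  act A B k i (p ++ q) = act A B k i p ++ act A B (res A B k i p) (path_src i p) q.
Proof.
elim: p => [|[j m] p IH] i k q //=.
by rewrite IH.
Qed.

Lemma res_cat p : forall i k q,
  res A B k i (p ++ q) = res A B (res A B k i p) (path_src i p) q.
Proof.
elim: p => [|[j m] p IH] i k q //=.
Qed.

Lemma A_path_cat p : forall i q,
  A_path A i (p ++ q) = (A_path A i p * A_path A (path_src i p) q)%N.
Proof.
elim: p => [|[j m] p IH] i q /=; first by rewrite mul1n.
by rewrite IH mulnA.
Qed.

Lemma B_path_cat p : forall i q,
  B_path B i (p ++ q) = B_path B i p * B_path B (path_src i p) q.
Proof.
elim: p => [|[j m] p IH] i q /=; first by rewrite mul1r.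
by rewrite IH mulrA.
Qed.

Lemma A_path_gt0 p : forall i, is_path A i p -> (0 < A_path A i p)%N.
Proof.
elim: p => [|[j m] p IH] i //= /andP[mA Hp].
by rewrite muln_gt0 (IH _ Hp) andbT; apply: leq_ltn_trans mA.
Qed.

Lemma Gequiv_refl i k : Gequiv A B i k k.
Proof. by []. Qed.
Lemma Gequiv_sym i k l : Gequiv A B i k l -> Gequiv A B i l k.
Proof. by move=> H p Hp; rewrite H. Qed.
Lemma Gequiv_trans i k l n : Gequiv A B i k l -> Gequiv A B i l n -> Gequiv A B i k n.
Proof. by move=> H1 H2 p Hp; rewrite H1 // H2. Qed.

Lemma Gequiv_shift i x y t : Gequiv A B i x y -> Gequiv A B i (x + t) (y + t).
Proof.
move=> H p Hp.
have [Hx _] := act_res_add x t Hp.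
have [Hy _] := act_res_add y t Hp.
have [Ht _ _] := act_path t Hp.
by rewrite Hx Hy H.
Qed.

Lemma Gequiv_res i x y p : Gequiv A B i x y -> is_path A i p ->
  Gequiv A B (path_src i p) (res A B x i p) (res A B y i p).
Proof.
move=> H Hp q Hq.
have Hpq : is_path A i (p ++ q) by rewrite is_path_cat Hp Hq.
have := H _ Hpq; rewrite !act_cat => /eqP.
have [_ _ s1] := act_path x Hp.
have [_ _ s2] := act_path y Hp.
by rewrite eqseq_cat ?s1 ?s2 // => /andP[_ /eqP].
Qed.

Lemma Gequiv_mul i d : Gequiv A B i 0 d -> forall q : int, Gequiv A B i 0 (q * d).
Proof.
move=> H.
have Hn : forall n : nat, Gequiv A B i 0 (n%:Z * d).
  elim=> [|n IH]; first by rewrite mul0r.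
  apply: (Gequiv_trans H).
  have := Gequiv_shift d IH; rewrite add0r.
  by rewrite -[n.+1]addn1 PoszD mulrDl mul1r.
case=> [n|n]; first exact: Hn.
apply: Gequiv_sym.
have := Gequiv_shift (- (n.+1%:Z * d)) (Hn n.+1).
rewrite add0r subrr NegzE mulNr; done.
Qed.

Definition injv (j : 'I_N) := forall x y, Gequiv A B j x y -> x = y.

Lemma inf_injv j : isotropy_infinite A B j -> injv j.
Proof.
move=> Hinf x y H; apply/eqP; apply/negP => /negP nxy.
pose d := y - x.
have d0 : d != 0 by rewrite /d subr_eq0 eq_sym.
have H0 : Gequiv A B j 0 d.
  by have := Gequiv_shift (- x) H; rewrite subrr.
pose L := [seq n%:Z | n <- iota 0 `|d|].
have [k Hk] := Hinf L.
apply: (Hk ((k %% d)%Z)).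
  apply/mapP; exists (absz (k %% d)%Z).
    rewrite mem_iota add0n /=.
    have := ltz_mod k d0; have := modz_ge0 k d0. lia.
  by rewrite gez0_abs // modz_ge0.
have := Gequiv_shift (k %% d)%Z (Gequiv_mul H0 (k %/ d)%Z).
rewrite add0r -divz_eq. exact: Gequiv_sym.
Qed.

Lemma sum_abs_ge (L : seq int) l : l \in L -> (`|l| <= \sum_(x <- L) `|x|)%N.
Proof.
elim: L => [|a L IH] //=; rewrite in_cons big_cons => /orP[/eqP->|/IH H].
  exact: leq_addr.
exact: leq_trans H (leq_addl _ _).
Qed.

Lemma injv_inf j : injv j -> isotropy_infinite A B j.
Proof.
move=> Hj L; exists ((\sum_(x <- L) `|x|)%N.+1)%:Z => l lL /Hj E.
have := sum_abs_ge lL; rewrite -E absz_nat; lia.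
Qed.

Lemma res0 p : forall i, is_path A i p -> res A B 0 i p = 0.
Proof.
elim: p => [|[j m] p IH] i //= /andP[mA Hp].
rewrite mul0r add0r divz_small ?IH //.
Qed.

Hypothesis KP : Katsura_pair A B.

Lemma edge_inf i j : B i j != 0 -> isotropy_infinite A B j -> isotropy_infinite A B i.
Proof.
move=> Bij Hj; apply: injv_inf => x y H.
have Aij : (0 < A i j)%N.
  rewrite lt0n; apply/negP => /eqP A0; move: Bij; by rewrite KP.
have a0' : (A i j)%:Z != 0 by rewrite eqz_nat -lt0n.
pose d := y - x.
have H0 : Gequiv A B i 0 d.
  by have := Gequiv_shift (- x) H; rewrite subrr.
have H1 := Gequiv_mul H0 (A i j)%:Z.
have Hp : is_path A i [:: (j, 0%N)] by rewrite /= Aij.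
have := Gequiv_res H1 Hp; rewrite /= !addr0 mul0r.
rewrite div0z -mulrA mulKz // /path_src /=.
move/(inf_injv Hj) => /esym /eqP.
rewrite mulf_eq0 (negbTE Bij) orbF /d subr_eq0 => /eqP ->; done.
Qed.

Lemma finite_res p : forall j k, ~ isotropy_infinite A B j -> is_path A j p ->
  res A B k j p = 0 \/ ~ isotropy_infinite A B (path_src j p).
Proof.
elim: p => [|[j' m] p IH] j k Hj //=; first by right.
move=> /andP[mA Hp].
have [B0|B0] := eqVneq (B j j') 0.
  left; rewrite B0 mulr0 add0r divz_small ?res0 //; rewrite ?absz_nat; lia.
have Hj' : ~ isotropy_infinite A B j' by move=> /(edge_inf B0).
exact: IH.
Qed.

Lemma path_trichotomy p : forall i k, is_path A i p ->
  is_inf_path A B i p \/ res A B k i p = 0 \/ ~ isotropy_infinite A B (path_src i p).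
Proof.
elim: p => [|[j m] p IH] i k //=; first by left.
move=> /andP[mA Hp].
have [B0|B0] := eqVneq (B i j) 0.
  right; left; rewrite B0 mulr0 add0r divz_small ?res0 //; rewrite ?absz_nat; lia.
have [Hj|Hj] := pselect (isotropy_infinite A B j).
  have [H|H] := IH j ((k * B i j + m%:Z) %/ (A i j)%:Z)%Z Hp.
    by left; split.
  by right.
by right; apply: finite_res.
Qed.

Lemma inf_path_path p : forall i, is_inf_path A B i p -> is_path A i p.
Proof.
elim: p => [|[j m] p IH] i //= [mA _ _ Hp].
by rewrite mA (IH _ Hp).
Qed.

Lemma inf_path_cat p : forall i q, is_inf_path A B i (p ++ q) ->
  is_inf_path A B i p /\ is_inf_path A B (path_src i p) q.
Proof.
elim: p => [|[j m] p IH] i q //= [mA Hj Bj Hp].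
by have [H1 H2] := IH _ _ Hp.
Qed.

Definition Bm := (\max_(ij : 'I_N * 'I_N) `|B ij.1 ij.2|)%N.+1.
Definition Am := (\max_(ij : 'I_N * 'I_N) A ij.1 ij.2)%N.+1.

Lemma Bm_ge i j : (`|B i j| <= Bm)%N.
Proof. have h := @leq_bigmax _ (fun ij : 'I_N * 'I_N => `|B ij.1 ij.2|%N) (i, j). exact: leqW h. Qed.
Lemma Am_ge i j : (A i j <= Am)%N.
Proof. have h := @leq_bigmax _ (fun ij : 'I_N * 'I_N => A ij.1 ij.2) (i, j). exact: leqW h. Qed.

Lemma B_path_bound p : forall i, (`|B_path B i p| <= Bm ^ size p)%N.
Proof.
elim: p => [|[j m] p IH] i //=.
by rewrite abszM expnS leq_mul ?Bm_ge.
Qed.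
Lemma A_path_bound p : forall i, (A_path A i p <= Am ^ size p)%N.
Proof.
elim: p => [|[j m] p IH] i //=.
by rewrite expnS leq_mul ?Am_ge.
Qed.

Lemma res_bound p : forall i k, is_path A i p ->
  (`|res A B k i p| * A_path A i p <=
     `|k| * `|B_path B i p| + A_path A i p * (size p * Bm ^ size p))%N.
Proof.
elim: p => [|[j m] p IH] i k /=; first by rewrite !muln1 leq_addr.
move=> /andP[mA Hp].
set k1 := ((k * B i j + m%:Z) %/ (A i j)%:Z)%Z.
have h1 := IH j k1 Hp.
have h2 : (`|k1| * A i j <= `|k| * `|B i j| + A i j)%N.
  by rewrite -abszM; apply: step_bound.
have h3 := B_path_bound p j.
have h4 : (0 < A_path A j p)%N by apply: A_path_gt0.
have h5 : (1 <= Bm)%N by [].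
set R0 := `|res _ _ _ _ _|%N in h1 *.
set Ap := A_path A j p in h1 h4 *.
set Bp := `|B_path B j p|%N in h1 h3 *.
set s := size p in h1 h3 *.
set X := (Bm ^ s)%N in h1 h3 *.
set a := A i j in h2 *.
rewrite abszM expnS.
have e1 : (R0 * (a * Ap) <= a * (`|k1| * Bp + Ap * (s * X)))%N.
  by rewrite mulnCA leq_mul2l h1 orbT.
apply: leq_trans e1 _.
have e2 : (a * (`|k1| * Bp) <= (`|k| * `|B i j| + a) * Bp)%N.
  by rewrite mulnA leq_mul2r [(a * _)%N]mulnC h2 orbT.
have e3 : (a * Bp <= a * Ap * X)%N.
  rewrite -mulnA leq_mul2l; apply/orP; right.
  by apply: leq_trans h3 _; rewrite leq_pmull.
have e4 : (a * Ap * (s.+1 * X) <= a * Ap * (s.+1 * (Bm * X)))%N.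
  by rewrite leq_mul2l leq_mul2l leq_pmull // !orbT.
move: e2 e3 e4; set K := `|k|%N; set b := `|B i j|%N; set K1 := `|k1|%N.
lia.
Qed.

Lemma res_big p : forall i k, is_path A i p ->
  exists p', [/\ is_path A i p', path_src i p' = path_src i p, size p' = size p &
    (`|k| * `|B_path B i p| <= `|res A B k i p'| * A_path A i p)%N].
Proof.
elim: p => [|[j m] p IH] i k /=.
  by move=> _; exists [::]; rewrite !muln1.
move=> /andP[mA Hp].
have a0 : (0 < A i j)%N by apply: leq_ltn_trans mA.
have [m' m'A Hm'] := step_big (k * B i j) a0.
set k1 := ((k * B i j + m'%:Z) %/ (A i j)%:Z)%Z in Hm'.
have [q [Hq Hsrc Hsz Hb]] := IH j k1 Hp.
exists ((j, m') :: q); split => /=.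
- by rewrite m'A Hq.
- by move: Hsrc; rewrite /path_src.
- by rewrite Hsz.
- rewrite -/k1 abszM mulnA.
  apply: leq_trans (_ : `|k1| * A i j * `|B_path B j p| <= _)%N.
    by rewrite leq_mul2r -abszM Hm' orbT.
  by rewrite [(A i j * _)%N]mulnC mulnA -mulnA [(A i j * _)%N]mulnC mulnA leq_mul2r Hb orbT.
Qed.

Lemma inf_path_src p : forall i, is_inf_path A B i p -> (0 < size p)%N ->
  isotropy_infinite A B (path_src i p).
Proof.
elim: p => [|[j m] p IH] i //= [mA Hj Bj Hp] _.
case: p IH Hp => [|e p] IH Hp; first by [].
have := IH j Hp isT; by rewrite /path_src.
Qed.

Lemma sum_abs_ge2 (L : seq ('I_N * int)) l : l \in L -> (`|l.2| <= \sum_(x <- L) `|x.2|)%N.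
Proof.
elim: L => [|a L IH] //=; rewrite in_cons big_cons => /orP[/eqP->|/IH H].
  exact: leq_addr.
exact: leq_trans H (leq_addl _ _).
Qed.

Definition Pn (n1 : nat) := forall i p, is_inf_path A B i p -> size p = n1 ->
  (`|B_path B i p| < A_path A i p)%N.

Lemma contr_P : contracting A B -> exists n1, (0 < n1)%N /\ Pn n1.
Proof.
move=> [F HF].
pose M := (\sum_(f <- F) `|f.2|)%N.
pose k : int := (M.+1)%:Z.
have [nf Hnf] := boolp.choice (fun i => HF i k).
exists (\max_(i : 'I_N) nf i)%N.+1; split => //.
move=> i p Hp Hsz; rewrite ltnNge; apply/negP => HAB.
have Hpp := inf_path_path Hp.
have [p' [Hp' Hsrc Hsz' Hb]] := res_big k Hpp.
have Hn : (nf i <= size p')%N.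
  rewrite Hsz' Hsz; apply: leqW; exact: (@leq_bigmax _ nf i).
have [f fF [f1 Hf]] := Hnf i p' Hp' Hn.
have Hinf : isotropy_infinite A B (path_src i p) by apply: (inf_path_src Hp); rewrite Hsz.
rewrite -Hsrc -f1 in Hinf.
have E := inf_injv Hinf Hf.
have Hle : (`|f.2| <= M)%N.
  by rewrite /M; have := sum_abs_ge2 fF.
have Ap0 := A_path_gt0 Hpp.
have : (`|k| * A_path A i p <= `|res A B k i p'| * A_path A i p)%N.
  apply: leq_trans Hb; by rewrite leq_mul2l HAB orbT.
rewrite leq_mul2r (negbTE (lt0n_neq0 Ap0)) /= E; move: Hle; lia.
Qed.

Section Contr.
Variables (n1 : nat) (n1pos : (0 < n1)%N) (HP : Pn n1).
Let D := (n1 * Bm ^ n1)%N.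
Let K := (Am ^ n1 * D)%N.
Let K1 := (K * Bm ^ n1 + D)%N.

Lemma chunk_bound i c k : is_inf_path A B i c -> size c = n1 ->
  (`|res A B k i c| <= maxn (`|k|.-1) K)%N.
Proof.
move=> Hc Hs.
have Hcp := inf_path_path Hc.
have h1 := res_bound k Hcp.
have h2 := HP Hc Hs.
have h3 : (A_path A i c * D <= K)%N.
  by rewrite /K leq_mul2r -Hs A_path_bound orbT.
have h4 := A_path_gt0 Hcp.
rewrite Hs -/D in h1.
move: h1 h2 h3 h4.
set R0 := `|res _ _ _ _ _|%N; set Ac := A_path _ _ _; set Bc := `|B_path _ _ _|%N.
set kk := `|k|%N.
move=> h1 h2 h3 h4.
rewrite leq_max; apply/orP; case: (leqP R0 kk.-1) => g1; first by left.
right; case: (leqP R0 K) => g2 //; exfalso.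
have g3 : (kk * Ac <= R0 * Ac)%N by rewrite leq_mul2r; apply/orP; right; lia.
have g4 : (kk * Bc + kk <= kk * Ac)%N by rewrite addnC -mulnS leq_mul2l h2 orbT.
have g5 : (kk <= K)%N by lia.
have g6 : (kk * Bc <= K * Bc)%N by rewrite leq_mul2r g5 orbT.
have g7 : (K * Bc + K <= K * Ac)%N by rewrite addnC -mulnS leq_mul2l h2 orbT.
have g8 : (K * Ac < R0 * Ac)%N by rewrite ltn_mul2r g2 h4.
lia.
Qed.

Lemma partial_bound i q k : is_path A i q -> (size q <= n1)%N ->
  (`|res A B k i q| <= `|k| * Bm ^ n1 + D)%N.
Proof.
move=> Hq Hs.
have h1 := res_bound k Hq.
have h4 := A_path_gt0 Hq.
have h2 : (`|B_path B i q| <= Bm ^ n1)%N.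
  apply: leq_trans (B_path_bound _ _) _; exact: leq_pexp2l.
have h3 : (size q * Bm ^ size q <= D)%N.
  rewrite /D; apply: leq_mul => //; exact: leq_pexp2l.
move: h1 h2 h3 h4.
set R0 := `|res _ _ _ _ _|%N; set Aq := A_path _ _ _; set Bq := `|B_path _ _ _|%N.
set kk := `|k|%N; set X := (Bm ^ n1)%N; set Y := (size q * _)%N.
move=> h1 h2 h3 h4.
have g1 : (kk * Bq <= kk * X)%N by rewrite leq_mul2l h2 orbT.
have g2 : (Aq * Y <= Aq * D)%N by rewrite leq_mul2l h3 orbT.
have g3 : (kk * X <= Aq * (kk * X))%N by rewrite leq_pmull.
have g4 : (R0 * Aq <= Aq * (kk * X + D))%N by rewrite mulnDr; lia.
by rewrite mulnC leq_mul2l (negbTE (lt0n_neq0 h4)) /= in g4.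
Qed.

Lemma small_bound s : forall i p k, (size p <= s)%N -> is_inf_path A B i p ->
  (`|k| <= K)%N -> (`|res A B k i p| <= K1)%N.
Proof.
elim: s => [|s IH] i p k Hs Hp Hk.
  have Hq := inf_path_path Hp.
  apply: leq_trans (partial_bound k Hq _) _; first lia.
  by rewrite /K1 leq_add2r leq_mul2r Hk orbT.
have [small|big] := ltnP (size p) n1.
  have Hq := inf_path_path Hp.
  apply: leq_trans (partial_bound k Hq _) _; first lia.
  by rewrite /K1 leq_add2r leq_mul2r Hk orbT.
rewrite -(cat_take_drop n1 p) in Hp *.
have [Hc Hd] := inf_path_cat Hp.
rewrite res_cat; apply: IH Hd _.
  rewrite size_drop; lia.
apply: leq_trans (chunk_bound k Hc _) _; first by rewrite size_takel.
rewrite geq_max; apply/andP; split; lia.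
Qed.

Lemma big_bound r : forall i p k, (n1 * r <= size p)%N -> is_inf_path A B i p ->
  (`|k| <= K + r)%N -> (`|res A B k i p| <= K1)%N.
Proof.
elim: r => [|r IH] i p k Hs Hp Hk.
  by apply: (small_bound (leqnn _) Hp); rewrite addn0 in Hk.
rewrite -(cat_take_drop n1 p) in Hp *.
have Hn1 : (n1 <= size p)%N by move: Hs; rewrite mulnS; lia.
have [Hc Hd] := inf_path_cat Hp.
rewrite res_cat; apply: IH Hd _.
  rewrite size_drop; move: Hs; rewrite mulnS; lia.
apply: leq_trans (chunk_bound k Hc _) _; first by rewrite size_takel.
rewrite geq_max; apply/andP; split; lia.
Qed.

Lemma fin_lists : exists Lf : 'I_N -> seq int, forall j,
  ~ isotropy_infinite A B j -> forall k, exists2 l, l \in Lf j & Gequiv A B j k l.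
Proof.
have H : forall j, exists L : seq int, ~ isotropy_infinite A B j ->
    forall k, exists2 l, l \in L & Gequiv A B j k l.
  move=> j; have [Hj|Hj] := pselect (isotropy_infinite A B j).
    by exists [::].
  apply: contrapT => Hn; apply: Hj => L.
  apply: contrapT => HL; apply: Hn; exists L => _ k.
  apply: contrapT => Hk; apply: HL; exists k => l lL Hkl.
  by apply: Hk; exists l.
have [Lf HLf] := boolp.choice H.
by exists Lf.
Qed.

Lemma P_contr : contracting A B.
Proof.
have [Lf HLf] := fin_lists.
pose rng := [seq x%:Z - K1%:Z | x <- iota 0 (K1.*2.+1)].
have Hrng : forall l : int, (`|l| <= K1)%N -> l \in rng.
  move=> l Hl; apply/mapP; exists (absz (l + K1%:Z)).
    rewrite mem_iota add0n; lia.
  lia.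
exists [seq (j, l) | j <- enum 'I_N, l <- rng ++ Lf j].
move=> i k; exists (n1 * `|k|)%N => p Hp Hn.
have mem : forall j l, (l \in rng) || (l \in Lf j) -> (j, l) \in
    [seq (j, l) | j <- enum 'I_N, l <- rng ++ Lf j].
  move=> j l Hl; apply/flatten_mapP; exists j; first by rewrite mem_enum.
  by apply: map_f; rewrite mem_cat.
have [H|[H|H]] := path_trichotomy k Hp.
- exists (path_src i p, res A B k i p); last by split.
  apply: mem; apply/orP; left; apply: Hrng.
  apply: (big_bound Hn H); exact: leq_addl.
- exists (path_src i p, 0); last by rewrite H; split.
  by apply: mem; apply/orP; left; apply: Hrng.
- have [l lL Hl] := HLf _ H (res A B k i p).
  exists (path_src i p, l) => //.
  by apply: mem; rewrite lL orbT.
Qed.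
End Contr.
End K.

Section R1s.
Local Open Scope classical_set_scope.
Lemma esup_lt1 (R : realType) (u : (\bar R)^nat) n2 (t : R) : t < 1 ->
  (forall n, (n2 <= n)%N -> (u n <= t%:E)%E) -> (limn_esup u < 1%:E)%E.
Proof.
move=> t1 H.
rewrite limn_esup_lim (cvg_lim _ (@cvg_esups_inf _ u)) //.
apply: (@le_lt_trans _ _ t%:E); last by rewrite lte_fin.
apply: le_trans (ereal_inf_lbound _) _; first by exists n2.
apply: ub_ereal_sup => _ [k /= hk <-]; exact: H.
Qed.

Lemma esup_lt1_inv (R : realType) (u : (\bar R)^nat) :
  (limn_esup u < 1%:E)%E -> exists n2, forall n, (n2 <= n)%N -> (u n < 1%:E)%E.
Proof.
rewrite limn_esup_lim (cvg_lim _ (@cvg_esups_inf _ u)) //.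
move=> /ereal_inf_lt [_ [n2 _ <-] H]; exists n2 => n hn.
apply: le_lt_trans H; apply: ereal_sup_ubound; by exists n.
Qed.

End R1s.

Section KR.
Local Open Scope classical_set_scope.
Variables (R : realType) (N : nat) (A : 'M[nat]_N) (B : 'M[int]_N).

Definition rat (i : 'I_N) p : R := (`|B_path B i p|%N)%:R / (A_path A i p)%:R.

Lemma normz_R (z : int) : (`|z|)%:~R = (`|z|%N)%:R :> R.
Proof. by rewrite -abszE. Qed.

Definition S n := [set r : R | exists (i : 'I_N) (p : seq ('I_N * nat)),
        [/\ size p = n, is_inf_path A B i p &
            r = (`|B_path B i p|%:~R) / (A_path A i p)%:R]].

Lemma maxE n : max_ratio A B R n = sup (S n).
Proof. by []. Qed.

Lemma SP n r : S n r <-> exists i p, [/\ size p = n, is_inf_path A B i p & r = rat i p].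
Proof.
split=> [[i [p [H1 H2 H3]]]|[i [p [H1 H2 H3]]]]; exists i, p; split => //;
  by rewrite H3 /rat normz_R.
Qed.

Lemma rat_ge0 i p : 0 <= rat i p.
Proof. by rewrite /rat divr_ge0. Qed.

Lemma rat_le i p : is_path A i p -> rat i p <= (`|B_path B i p|%N)%:R.
Proof.
move=> Hp; have h := A_path_gt0 Hp.
rewrite /rat ler_pdivrMr ?ltr0n // ler_peMr // ler1n //.
Qed.

Lemma S_ub n : ubound (S n) ((Bm B) ^ n)%:R.
Proof.
move=> r /SP [i [p [Hs Hp ->]]].
apply: le_trans (rat_le (inf_path_path Hp)) _.
by rewrite ler_nat -Hs B_path_bound.
Qed.

Lemma S_has_ub n : has_ubound (S n).
Proof. by exists ((Bm B) ^ n)%:R; exact: S_ub. Qed.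

Lemma max_ge0 n : 0 <= max_ratio A B R n.
Proof.
rewrite maxE; have [[r Sr]|S0] := pselect (S n !=set0).
  apply: le_trans (ub_le_sup (S_has_ub n) Sr).
  by move/SP: Sr => [i [p [_ _ ->]]]; exact: rat_ge0.
suff -> : S n = set0 by rewrite sup0.
by apply/seteqP; split => x // Sx; apply: S0; exists x.
Qed.

Lemma max_lt1_P n : max_ratio A B R n < 1 -> Pn A B n.
Proof.
move=> H i p Hp Hs.
have Sr : S n (rat i p) by apply/SP; exists i, p.
have := le_lt_trans (ub_le_sup (S_has_ub n) Sr) H.
have h := A_path_gt0 (inf_path_path Hp).
by rewrite /rat ltr_pdivrMr ?ltr0n // mul1r ltr_nat.
Qed.

Lemma max_le n (c : R) : 0 <= c -> (forall i p, size p = n -> is_inf_path A B i p -> rat i p <= c) ->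
  max_ratio A B R n <= c.
Proof.
move=> c0 H; rewrite maxE; have [S1|S0] := pselect (S n !=set0).
  apply: ge_sup => // r /SP [i [p [Hs Hp ->]]]; exact: H.
suff -> : S n = set0 by rewrite sup0.
by apply/seteqP; split => x // Sx; apply: S0; exists x.
Qed.


Lemma rat_cat i p q : rat i (p ++ q) = rat i p * rat (path_src i p) q.
Proof. by rewrite /rat A_path_cat B_path_cat abszM !natrM mulf_div. Qed.

Section P.
Variables (n1 : nat) (n1pos : (0 < n1)%N) (HP : Pn A B n1).
Let M : R := ((Am A) ^ n1)%:R.
Let rho : R := 1 - M^-1.
Let C : R := ((Bm B) ^ n1)%:R.

Lemma M_ge1 : 1 <= M.
Proof. by rewrite /M ler1n expn_gt0. Qed.

Lemma rho_ge0 : 0 <= rho.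
Proof. have h := M_ge1; rewrite /rho subr_ge0 invf_le1 //; exact: lt_le_trans ltr01 h. Qed.

Lemma rho_lt1 : rho < 1.
Proof. by rewrite /rho ltrBlDr ltrDl invr_gt0 (lt_le_trans ltr01 M_ge1). Qed.

Lemma chunk_rat i c : is_inf_path A B i c -> size c = n1 -> rat i c <= rho.
Proof.
move=> Hc Hs.
have h2 := HP Hc Hs.
have h3 := A_path_bound A c i; rewrite Hs in h3.
have h4 := A_path_gt0 (inf_path_path Hc).
rewrite /rat /rho.
set a := A_path A i c in h2 h3 h4 *; set b := `|B_path B i c|%N in h2 *.
have a0 : 0 < a%:R :> R by rewrite ltr0n.
rewrite ler_pdivrMr // mulrBl mul1r.
have e1 : b%:R <= a%:R - 1 :> R.
  by rewrite lerBrDr natr1 ler_nat.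
apply: le_trans e1 _; rewrite lerD2l lerN2.
have hM := M_ge1; rewrite ler_pdivrMl ?mulr1; first by rewrite /M ler_nat.
exact: lt_le_trans ltr01 hM.
Qed.

Lemma rat_bound s : forall i p, (size p <= s)%N -> is_inf_path A B i p ->
  rat i p <= C * rho ^+ (size p %/ n1).
Proof.
have small : forall i p, (size p < n1)%N -> is_inf_path A B i p ->
    rat i p <= C * rho ^+ (size p %/ n1).
  move=> i p Hs Hp; rewrite divn_small // expr0 mulr1.
  apply: le_trans (rat_le (inf_path_path Hp)) _.
  rewrite /C ler_nat; apply: leq_trans (B_path_bound _ _ _) _.
  apply: leq_pexp2l => //; exact: ltnW.
elim: s => [|s IH] i p Hs Hp.
  by apply: small => //; move: Hs; rewrite leqn0 => /eqP ->.
have [sm|big] := ltnP (size p) n1; first exact: small.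
rewrite -(cat_take_drop n1 p) in Hp *.
have [Hc Hd] := inf_path_cat Hp.
rewrite rat_cat size_cat size_takel // size_drop.
have -> : (n1 + (size p - n1))%N = (1 * n1 + (size p - n1))%N by rewrite mul1n.
rewrite divnMDl // add1n exprS [X in _ <= X]mulrCA.
apply: ler_pM.
- exact: rat_ge0.
- exact: rat_ge0.
- by apply: chunk_rat => //; rewrite size_takel.
- have := IH _ (drop n1 p); rewrite size_drop; apply => //; lia.
Qed.

Lemma max_bound n : max_ratio A B R n <= C * rho ^+ (n %/ n1).
Proof.
apply: max_le.
  by rewrite mulr_ge0 ?exprn_ge0 ?rho_ge0.
move=> i p Hs Hp; rewrite -Hs; exact: (rat_bound (leqnn _) Hp).
Qed.
End P.
End KR.

Lemma bern (R : realType) (h : R) m : 0 <= h -> 1 + m%:R * h <= (1 + h) ^+ m.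
Proof.
move=> h0; elim: m => [|m IH]; first by rewrite mul0r addr0 expr0.
rewrite exprS -natr1.
have m0 : 0 <= m%:R :> R by [].
have P0 : 0 <= (1 + h) ^+ m by rewrite exprn_ge0 // addr_ge0.
nra.
Qed.

Lemma geo_small (R : realType) (c x : R) : 0 <= c -> 0 <= x -> x < 1 ->
  exists m0, forall m, (m0 <= m)%N -> c * x ^+ m <= 1.
Proof.
move=> c0 x0 x1.
have [->|xn0] := eqVneq x 0.
  by exists 1%N => m hm; rewrite expr0n; case: m hm => // m _; rewrite /= mulr0.
have xp : 0 < x by rewrite lt_def xn0 x0.
pose h := x^-1 - 1.
have hp : 0 < h by rewrite /h subr_gt0 invf_gt1.
exists (Num.Def.archi_bound (c / h)) => m hm.
have hb := archi_boundP (divr_ge0 c0 (ltW hp)).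
have hb2 : c / h < m%:R.
  apply: lt_le_trans hb _; by rewrite ler_nat.
have e1 : c < m%:R * h by rewrite -ltr_pdivrMr.
have e2 := bern m (ltW hp).
have e3 : (1 + h) ^+ m = (x ^+ m)^-1 by rewrite /h addrC subrK exprVn.
have xm : 0 < x ^+ m by rewrite exprn_gt0.
have : c <= (x ^+ m)^-1 by rewrite -e3; apply: le_trans e2; apply: ltW; apply: lt_le_trans e1 _; rewrite lerDr.
move=> h1; have := ler_wpM2r (ltW xm) h1; rewrite mulVf // gt_eqF //.
Qed.

Lemma eventually_geo (R : realType) (c rho : R) n1 : (0 < n1)%N -> 0 <= c ->
  0 <= rho -> rho < 1 ->
  exists2 t : R, 0 <= t < 1 & exists n2, forall n, (n2 <= n)%N -> c * rho ^+ (n %/ n1) <= t ^+ n.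
Proof.
move=> n1p c0 r0 r1.
pose mu := rho `^ (n1%:R^-1).
have mu0 : 0 <= mu by apply: powR_ge0.
have muE : mu ^+ n1 = rho.
  rewrite /mu -powR_mulrn // -powRrM mulVf ?powRr1 //.
  by rewrite pnatr_eq0 -lt0n.
have mu1 : mu < 1.
  rewrite ltNge; apply/negP => h.
  have : 1 <= mu ^+ n1 by apply: exprn_ege1.
  by rewrite muE leNgt r1.
pose t := (1 + mu) / 2.
have t0 : 0 < t by rewrite /t divr_gt0 // ltr_pwDl.
have t1 : t < 1 by rewrite /t ltr_pdivrMr // mul1r; lra.
have mut : mu < t by rewrite /t ltr_pdivlMr //; lra.
exists t; first by rewrite (ltW t0) t1.
clearbody t.
have x0 : 0 <= mu / t by rewrite divr_ge0 // ltW.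
have x1 : mu / t < 1 by rewrite ltr_pdivrMr // mul1r.
have c'0 : 0 <= c / t ^+ n1 by rewrite divr_ge0 // exprn_ge0 // ltW.
have [m0 Hm0] := geo_small c'0 x0 x1.
exists (m0 + n1)%N => n hn.
have hq : (n - n1 <= n1 * (n %/ n1))%N.
  rewrite leq_subLR mulnC; have := ltn_ceil n n1p; rewrite mulSn; exact: ltnW.
have e1 : rho ^+ (n %/ n1) <= mu ^+ (n - n1).
  rewrite -muE -exprM; apply: ler_wiXn2l => //; exact: ltW.
have e2 : c * rho ^+ (n %/ n1) <= c * mu ^+ (n - n1) by apply: ler_wpM2l.
apply: le_trans e2 _.
have hn1 : (n1 <= n)%N by apply: leq_trans hn; exact: leq_addl.
have hm : (m0 <= n - n1)%N by rewrite leq_subRL // addnC.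
have e3 := Hm0 (n - n1)%N hm.
have tm : 0 < t ^+ (n - n1) by rewrite exprn_gt0.
have tn1 : 0 < t ^+ n1 by rewrite exprn_gt0.
have -> : t ^+ n = t ^+ (n - n1) * t ^+ n1 by rewrite -exprD subnK.
have E : c * mu ^+ (n - n1) = (c / t ^+ n1 * (mu / t) ^+ (n - n1)) * (t ^+ (n - n1) * t ^+ n1).
  rewrite exprMn exprVn.
  move: tm tn1; set a := t ^+ (n - n1); set b := t ^+ n1; set d := mu ^+ (n - n1).
  move=> tm tn1; field.
  by rewrite !gt_eqF.
rewrite E -[X in _ <= X]mul1r; apply: ler_wpM2r => //.
by rewrite ltW // mulr_gt0.
Qed.

Unset Implicit Arguments. Set Strict Implicit.

Theorem corollary3p2 (R : realType) (N : nat) (A : 'M[nat]_N) (B : 'M[int]_N) :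
  Katsura_pair A B ->
  (contracting A B <->
   (limn_esup (fun n : nat => ((max_ratio A B R n) `^ (n%:R^-1))%:E)
      < 1%:E)%E).
Proof.
move=> KP; split.
- move=> /contr_P [n1 [n1p HP]].
  have r0 := rho_ge0 R A n1.
  have r1 := rho_lt1 R A n1.
  have c0 : 0 <= ((Bm B) ^ n1)%:R :> R by [].
  have [t /andP[t0 t1] [n2 Hn2]] := eventually_geo n1p c0 r0 r1.
  apply: (@esup_lt1 _ _ (maxn n2 1) t t1) => n hn.
  rewrite lee_fin.
  have hn2 : (n2 <= n)%N by apply: leq_trans hn; exact: leq_maxl.
  have hn1 : (1 <= n)%N by apply: leq_trans hn; exact: leq_maxr.
  have hmax := le_trans (max_bound R n1p HP n) (Hn2 n hn2).
  have -> : t = (t ^+ n) `^ (n%:R^-1).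
    rewrite -powR_mulrn // -powRrM mulfV ?powRr1 //.
    by rewrite pnatr_eq0 -lt0n.
  apply: ge0_ler_powR => //; rewrite ?nnegrE ?invr_ge0 ?max_ge0 ?exprn_ge0 //.
- move=> /esup_lt1_inv [n2 Hn2].
  have := Hn2 n2.+1 (leqnSn _); rewrite lte_fin => H.
  apply: (@P_contr _ A B KP n2.+1 isT).
  apply: (@max_lt1_P R).
  rewrite ltNge; apply/negP => h.
  have : 1 `^ (n2.+1%:R^-1) <= (max_ratio A B R n2.+1) `^ (n2.+1%:R^-1).
    apply: ge0_ler_powR => //; rewrite ?nnegrE ?invr_ge0 //.
    exact: le_trans ler01 h.
  by rewrite powR1 leNgt H.
Qed.
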